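(* $c(7)=5$, $c(8)=6$, and $c(9)=6$.
   Context: For a prime power $q$, $\mathbb{F}_q$ is the finite field with $q$ elements. The Hamming distance on $\mathbb{F}_q^3$ is $d(u,v)=|\{i: u_i\ne v_i\}|$; $B(u)=\{v : d(u,v)\le 1\}$; the extended ball is $E(u)=\bigcup_{\lambda\in\mathbb{F}_q} B(\lambda u)$. A subset $\mathcal{H}\subseteq \mathbb{F}_q^3$ is a short covering of $\mathbb{F}_q^3$ if $\bigcup_{h\in\mathcal{H}} E(h)=\mathbb{F}_q^3$, and $c(q)$ denotes the minimum cardinality of a short covering of $\mathbb{F}_q^3$. *)

(* Defs.v *)
From HB Require Import structures.
From mathcomp Require Import all_boot all_order all_algebra all_field.
Set Implicit Arguments. Unset Strict Implicit. Unset Printing Implicit Defensive.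
Import GRing.Theory.
Local Open Scope ring_scope.

Section ShortCovering.
Variable F : finFieldType.

Definition vec3 := 'rV[F]_3.

Definition hdist (u v : vec3) : nat := #|[set i : 'I_3 | u 0 i != v 0 i]|.

Definition ball1 (u : vec3) : {set vec3} := [set v | (hdist u v <= 1)%N].

Definition ext_ball (u : vec3) : {set vec3} := \bigcup_(l : F) ball1 (l *: u).

Definition short_covering (H : {set vec3}) : bool :=
  \bigcup_(h in H) ext_ball h == [set: vec3].

Definition has_short_covering_of_size (n : nat) : bool :=
  [exists H : {set vec3}, short_covering H && (#|H| == n)].

Lemma exists_short_covering_size : exists n, has_short_covering_of_size n.
Proof.
exists #|[set: vec3]|; apply/existsP; exists [set: vec3]; rewrite eqxx andbT.
rewrite /short_covering eqEsubset subsetT /=; apply/subsetP => v _.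
apply/bigcupP; exists v; first by rewrite inE.
apply/bigcupP; exists 1; first by [].
rewrite inE scale1r /hdist.
suff -> : [set i : 'I_3 | v 0 i != v 0 i] = set0 by rewrite cards0.
by apply/setP => i; rewrite !inE eqxx.
Qed.

Definition c : nat := ex_minn exists_short_covering_size.

End ShortCovering.

(* Main.v *)
Require Import Defs.
From HB Require Import structures.
From mathcomp Require Import all_boot all_order all_algebra all_field.
From mathcomp Require Import ring zify.
From mathcomp Require Import cyclic.
Set Implicit Arguments. Unset Strict Implicit. Unset Printing Implicit Defensive.
Import GRing.Theory.
Local Open Scope ring_scope.

Section S.
Variable F : finFieldType.
Notation i0 := (0 : 'I_3).
Notation i1 := (1 : 'I_3).
Notation i2 := (2 : 'I_3).

Definition agree2 (u v : vec3 F) :=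
  [|| (u 0 i0 == v 0 i0) && (u 0 i1 == v 0 i1),
      (u 0 i0 == v 0 i0) && (u 0 i2 == v 0 i2) |
      (u 0 i1 == v 0 i1) && (u 0 i2 == v 0 i2)].

Lemma hdistE (u v : vec3 F) : (hdist u v <= 1)%N = agree2 u v.
Proof.
rewrite /hdist /agree2 -sum1_card big_mkcond /= !big_ord_recl big_ord0 /=.
have e0 : (ord0 : 'I_3) = i0 by apply: val_inj.
have e1 : (lift ord0 (ord0 : 'I_2)) = i1 by apply: val_inj.
have e2 : (lift ord0 (lift ord0 (ord0 : 'I_1))) = i2 by apply: val_inj.
rewrite !inE e0 e1 e2.
by case: (u 0 i0 == v 0 i0); case: (u 0 i1 == v 0 i1); case: (u 0 i2 == v 0 i2).
Qed.

Lemma cov_memE (H : {set vec3 F}) v :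
  (v \in \bigcup_(h in H) ext_ball h) = [exists h in H, exists l : F, agree2 (l *: h) v].
Proof.
apply/bigcupP/existsP => [[h hH /bigcupP [l _]]|[h /andP [hH /existsP [l hl]]]].
  rewrite inE hdistE => hl; exists h; rewrite hH /=; apply/existsP; by exists l.
exists h => //; apply/bigcupP; exists l => //; by rewrite inE hdistE.
Qed.

Definition mkv (a b c : F) : vec3 F := \row_(k < 3) nth 0 [:: a; b; c] k.

Lemma agree_mkv l (u : vec3 F) a b c : agree2 (l *: u) (mkv a b c) =
  [|| (l * u 0 i0 == a) && (l * u 0 i1 == b),
      (l * u 0 i0 == a) && (l * u 0 i2 == c) |
      (l * u 0 i1 == b) && (l * u 0 i2 == c)].
Proof. by rewrite /agree2 !mxE. Qed.

Lemma covered (H : {set vec3 F}) v : short_covering H ->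
  [exists h in H, exists l : F, agree2 (l *: h) v].
Proof. by move=> /eqP cov; rewrite -cov_memE cov inE. Qed.

Definition Lr (H : {set vec3 F}) (i j : 'I_3) : {set F} :=
  (fun u : vec3 F => u 0 j / u 0 i) @: [set u in H | (u 0 i != 0) && (u 0 j != 0)].

Lemma inLr (H : {set vec3 F}) i j (u : vec3 F) x : u \in H -> u 0 i != 0 -> u 0 j != 0 ->
  x = u 0 j / u 0 i -> x \in Lr H i j.
Proof. by move=> uH ui uj ->; apply/imsetP; exists u; rewrite // inE uH ui uj. Qed.

Lemma nz_of (l x y : F) : l * x = y -> y != 0 -> x != 0.
Proof. by move=> <-; apply: contra => /eqP ->; rewrite mulr0. Qed.
Lemma nzl_of (l x y : F) : l * x = y -> y != 0 -> l != 0.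
Proof. by move=> <-; apply: contra => /eqP ->; rewrite mul0r. Qed.
Lemma z_of (l x : F) : l * x = 0 -> l != 0 -> x = 0.
Proof. by move=> /eqP e ln; apply/eqP; move: e; rewrite mulf_eq0 (negbTE ln). Qed.

Lemma ratio (l x y a b : F) : l * x = a -> l * y = b -> a != 0 -> b / a = y / x.
Proof.
move=> e1 e2 an; have xn := nz_of e1 an; have ln := nzl_of e1 an.
by rewrite -e1 -e2 invfM mulrACA mulfV // mul1r.
Qed.

Lemma torus (H : {set vec3 F}) : short_covering H -> forall a b : F, a != 0 -> b != 0 ->
  [|| a \in Lr H i0 i1, b \in Lr H i0 i2 | b / a \in Lr H i1 i2].
Proof.
move=> cov a b an bn.
have /existsP [h /andP [hH /existsP [l]]] := covered (mkv 1 a b) cov.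
rewrite agree_mkv; case/or3P => /andP [/eqP e1 /eqP e2].
- apply/orP; left; apply: (inLr hH); first exact: nz_of e1 (oner_neq0 _).
    exact: nz_of e2 an.
  by rewrite -(ratio e1 e2 (oner_neq0 _)) divr1.
- apply/or3P; apply: Or32; apply: (inLr hH); first exact: nz_of e1 (oner_neq0 _).
    exact: nz_of e2 bn.
  by rewrite -(ratio e1 e2 (oner_neq0 _)) divr1.
- apply/or3P; apply: Or33; apply: (inLr hH); first exact: nz_of e1 an.
    exact: nz_of e2 bn.
  by rewrite -(ratio e1 e2 an).
Qed.


Lemma side0 (H : {set vec3 F}) : short_covering H -> forall a : F, a != 0 ->
  [exists u in H, (u 0 i0 == 0) && ((u 0 i1 != 0) || (u 0 i2 != 0))] || (a \in Lr H i1 i2).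
Proof.
move=> cov a an.
have /existsP [h /andP [hH /existsP [l]]] := covered (mkv 0 1 a) cov.
rewrite agree_mkv; case/or3P => /andP [/eqP e1 /eqP e2].
- apply/orP; left; apply/existsP; exists h; rewrite hH /=.
  have ln := nzl_of e2 (oner_neq0 _).
  by rewrite (z_of e1 ln) eqxx (nz_of e2 (oner_neq0 _)).
- apply/orP; left; apply/existsP; exists h; rewrite hH /=.
  have ln := nzl_of e2 an.
  by rewrite (z_of e1 ln) eqxx (nz_of e2 an) orbT.
- apply/orP; right; apply: (inLr hH); first exact: nz_of e1 (oner_neq0 _).
    exact: nz_of e2 an.
  by rewrite -(ratio e1 e2 (oner_neq0 _)) divr1.
Qed.

Lemma side1 (H : {set vec3 F}) : short_covering H -> forall a : F, a != 0 ->
  [exists u in H, (u 0 i1 == 0) && ((u 0 i0 != 0) || (u 0 i2 != 0))] || (a \in Lr H i0 i2).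
Proof.
move=> cov a an.
have /existsP [h /andP [hH /existsP [l]]] := covered (mkv 1 0 a) cov.
rewrite agree_mkv; case/or3P => /andP [/eqP e1 /eqP e2].
- apply/orP; left; apply/existsP; exists h; rewrite hH /=.
  have ln := nzl_of e1 (oner_neq0 _).
  by rewrite (z_of e2 ln) eqxx (nz_of e1 (oner_neq0 _)).
- apply/orP; right; apply: (inLr hH); first exact: nz_of e1 (oner_neq0 _).
    exact: nz_of e2 an.
  by rewrite -(ratio e1 e2 (oner_neq0 _)) divr1.
- apply/orP; left; apply/existsP; exists h; rewrite hH /=.
  have ln := nzl_of e2 an.
  by rewrite (z_of e1 ln) eqxx (nz_of e2 an) orbT.
Qed.

Lemma side2 (H : {set vec3 F}) : short_covering H -> forall a : F, a != 0 ->
  [exists u in H, (u 0 i2 == 0) && ((u 0 i0 != 0) || (u 0 i1 != 0))] || (a \in Lr H i0 i1).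
Proof.
move=> cov a an.
have /existsP [h /andP [hH /existsP [l]]] := covered (mkv 1 a 0) cov.
rewrite agree_mkv; case/or3P => /andP [/eqP e1 /eqP e2].
- apply/orP; right; apply: (inLr hH); first exact: nz_of e1 (oner_neq0 _).
    exact: nz_of e2 an.
  by rewrite -(ratio e1 e2 (oner_neq0 _)) divr1.
- apply/orP; left; apply/existsP; exists h; rewrite hH /=.
  have ln := nzl_of e1 (oner_neq0 _).
  by rewrite (z_of e2 ln) eqxx (nz_of e1 (oner_neq0 _)).
- apply/orP; left; apply/existsP; exists h; rewrite hH /=.
  have ln := nzl_of e1 an.
  by rewrite (z_of e2 ln) eqxx (nz_of e1 an) orbT.
Qed.

Lemma cover2 (X Y : {set F}) (f : F -> F) :
  (forall a, a != 0 -> (a \in X) || (a \in f @: Y)) -> (#|F|.-1 <= #|X| + #|Y|)%N.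
Proof.
move=> h; rewrite -(cardsC1 (0 : F)).
apply: leq_trans (_ : #|X :|: f @: Y| <= _)%N.
  by apply: subset_leq_card; apply/subsetP => a; rewrite !inE => /h.
by apply: leq_trans (leq_card_setU _ _) _; rewrite leq_add2l leq_imset_card.
Qed.


Section Lower.
Variable H : {set vec3 F}.
Hypothesis cov : short_covering H.
Let L0 := Lr H i1 i2.
Let L1 := Lr H i0 i2.
Let L2 := Lr H i0 i1.
Let n := #|F|.-1.

Lemma full_card (L : {set F}) : (forall a : F, a != 0 -> a \in L) -> (n <= #|L|)%N.
Proof.
move=> h; have := @cover2 L set0 id; rewrite cards0 addn0; apply => a an.
by rewrite h.
Qed.

Lemma grid2 : (n <= #|L2|)%N \/ (n <= #|L1| + #|L0|)%N.
Proof.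
case: (boolP [forall a : F, (a != 0) ==> (a \in L2)]) => [/forallP al | /forallPn [a]].
  by left; apply: full_card => a an; move: (al a); rewrite an.
rewrite negb_imply => /andP [an aL]; right.
apply: (@cover2 _ _ (fun c => a * c)) => b bn.
have := torus cov an bn; rewrite -/L2 -/L1 -/L0 (negbTE aL) /= => /orP [-> //| h].
by apply/orP; right; apply/imsetP; exists (b / a) => //; rewrite mulrC divfK.
Qed.

Lemma grid1 : (n <= #|L1|)%N \/ (n <= #|L2| + #|L0|)%N.
Proof.
case: (boolP [forall a : F, (a != 0) ==> (a \in L1)]) => [/forallP al | /forallPn [b]].
  by left; apply: full_card => a an; move: (al a); rewrite an.
rewrite negb_imply => /andP [bn bL]; right.
apply: (@cover2 _ _ (fun c => b / c)) => a an.
have := torus cov an bn; rewrite -/L2 -/L1 -/L0 (negbTE bL) /= => /orP [-> //| h].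
by apply/orP; right; apply/imsetP; exists (b / a) => //; rewrite invf_div mulrC divfK.
Qed.

Lemma grid0 : (n <= #|L0|)%N \/ (n <= #|L2| + #|L1|)%N.
Proof.
case: (boolP [forall a : F, (a != 0) ==> (a \in L0)]) => [/forallP al | /forallPn [d]].
  by left; apply: full_card => a an; move: (al a); rewrite an.
rewrite negb_imply => /andP [dn dL]; right.
apply: (@cover2 _ _ (fun c => c / d)) => a an.
have adn : a * d != 0 by rewrite mulf_neq0.
have e : a * d / a = d by rewrite mulrC mulKf.
have := torus cov an adn; rewrite -/L2 -/L1 -/L0 e (negbTE dL) orbF.
case/orP => [-> //| h].
by apply/orP; right; apply/imsetP; exists (a * d) => //; rewrite mulfK.
Qed.


Definition cnt (P : vec3 F -> bool) := #|[set u in H | P u]|.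
Lemma card_sep P : cnt P = \sum_(u in H) (P u : nat).
Proof.
rewrite /cnt -sum1_card (eq_bigl (fun u => (u \in H) && P u)); last by move=> u; rewrite inE.
by rewrite big_mkcondr /=; apply: eq_bigr => u _; case: (P u).
Qed.

Let z0 (u : vec3 F) := u 0 i0 == 0.
Let z1 (u : vec3 F) := u 0 i1 == 0.
Let z2 (u : vec3 F) := u 0 i2 == 0.
Let pT u := [&& ~~ z0 u, ~~ z1 u & ~~ z2 u].
Let pW0 u := [&& z0 u, ~~ z1 u & ~~ z2 u].
Let pW1 u := [&& ~~ z0 u, z1 u & ~~ z2 u].
Let pW2 u := [&& ~~ z0 u, ~~ z1 u & z2 u].
Let pS0 u := [&& ~~ z0 u, z1 u & z2 u].
Let pS1 u := [&& z0 u, ~~ z1 u & z2 u].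
Let pS2 u := [&& z0 u, z1 u & ~~ z2 u].

Lemma hsum : (cnt pT + cnt pW0 + cnt pW1 + cnt pW2 + cnt pS0 + cnt pS1 + cnt pS2 <= #|H|)%N.
Proof.
rewrite !card_sep -!big_split /= -sum1_card; apply: leq_sum => u _.
rewrite /pT /pW0 /pW1 /pW2 /pS0 /pS1 /pS2.
by case: (z0 u); case: (z1 u); case: (z2 u).
Qed.

Lemma hl (i j : 'I_3) (Q R : vec3 F -> bool) :
  (forall u : vec3 F, nat_of_bool ((u 0 i != 0) && (u 0 j != 0)) = addn (Q u) (R u)) ->
  (#|Lr H i j| <= cnt Q + cnt R)%N.
Proof.
move=> e; apply: leq_trans (leq_imset_card _ _) _.
have -> : #|[set u in H | (u 0 i != 0) && (u 0 j != 0)]| = cnt (fun u => (u 0 i != 0) && (u 0 j != 0)) by [].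
by rewrite !card_sep -big_split /=; apply: eq_leq; apply: eq_bigr => u _; rewrite e.
Qed.

Lemma hl0 : (#|L0| <= cnt pT + cnt pW0)%N.
Proof. apply: hl => u; rewrite /pT /pW0 /z0 /z1 /z2; by case: (u 0 i0 == 0); case: (u 0 i1 == 0); case: (u 0 i2 == 0). Qed.
Lemma hl1 : (#|L1| <= cnt pT + cnt pW1)%N.
Proof. apply: hl => u; rewrite /pT /pW1 /z0 /z1 /z2; by case: (u 0 i0 == 0); case: (u 0 i1 == 0); case: (u 0 i2 == 0). Qed.
Lemma hl2 : (#|L2| <= cnt pT + cnt pW2)%N.
Proof. apply: hl => u; rewrite /pT /pW2 /z0 /z1 /z2; by case: (u 0 i0 == 0); case: (u 0 i1 == 0); case: (u 0 i2 == 0). Qed.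

Lemma pos3 (P Q R : vec3 F -> bool) u : u \in H -> P u || Q u || R u ->
  (1 <= cnt P + cnt Q + cnt R)%N.
Proof.
move=> uH h; rewrite !card_sep -!big_split /= (bigD1 u) //=.
by apply: leq_trans (leq_addr _ _); move: h; case: (P u); case: (Q u); case: (R u).
Qed.

Lemma hside0 : (1 <= cnt pW0 + cnt pS1 + cnt pS2)%N \/ (n <= #|L0|)%N.
Proof.
case: (boolP [exists u in H, (u 0 i0 == 0) && ((u 0 i1 != 0) || (u 0 i2 != 0))]).
  case/existsP => u /andP [uH h]; left; apply: (pos3 uH); move: h.
  rewrite /pW0 /pS1 /pS2 /z0 /z1 /z2.
  by case: (u 0 i0 == 0); case: (u 0 i1 == 0); case: (u 0 i2 == 0).
move=> nex; right; apply: full_card => a an.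
by have := side0 cov an; rewrite (negbTE nex).
Qed.

Lemma hside1 : (1 <= cnt pW1 + cnt pS0 + cnt pS2)%N \/ (n <= #|L1|)%N.
Proof.
case: (boolP [exists u in H, (u 0 i1 == 0) && ((u 0 i0 != 0) || (u 0 i2 != 0))]).
  case/existsP => u /andP [uH h]; left; apply: (pos3 uH); move: h.
  rewrite /pW1 /pS0 /pS2 /z0 /z1 /z2.
  by case: (u 0 i0 == 0); case: (u 0 i1 == 0); case: (u 0 i2 == 0).
move=> nex; right; apply: full_card => a an.
by have := side1 cov an; rewrite (negbTE nex).
Qed.

Lemma hside2 : (1 <= cnt pW2 + cnt pS0 + cnt pS1)%N \/ (n <= #|L2|)%N.
Proof.
case: (boolP [exists u in H, (u 0 i2 == 0) && ((u 0 i0 != 0) || (u 0 i1 != 0))]).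
  case/existsP => u /andP [uH h]; left; apply: (pos3 uH); move: h.
  rewrite /pW2 /pS0 /pS1 /z0 /z1 /z2.
  by case: (u 0 i0 == 0); case: (u 0 i1 == 0); case: (u 0 i2 == 0).
move=> nex; right; apply: full_card => a an.
by have := side2 cov an; rewrite (negbTE nex).
Qed.

Lemma lower : (6 <= n)%N -> (n <= 8)%N -> ((if n == 6 then 5 else 6) <= #|H|)%N.
Proof.
move=> h6 h8.
have := hsum; have := hl0; have := hl1; have := hl2.
have := grid0; have := grid1; have := grid2.
have := hside0; have := hside1; have := hside2.
case: eqP => [e|ne] /=; lia.
Qed.

End Lower.

End S.
Lemma unity_nz (F : finFieldType) (x : F) : x != 0 -> x ^+ #|F|.-1 = 1.
Proof.
move=> nz; have := expf_card x.
have h1 := finNzRing_gt1 F.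
rewrite -(prednK (ltnW h1)) exprS => h.
by apply: (mulfI nz); rewrite mulr1 h.
Qed.

Lemma gen_exists (F : finFieldType) :
  exists g : F, g ^+ #|F|.-1 = 1 /\ forall x : F, x != 0 -> exists k, x = g ^+ k.
Proof.
set n := #|F|.-1.
have n0 : (0 < n)%N by rewrite /n -ltnS prednK ?finNzRing_gt1 // ltnW // finNzRing_gt1.
pose rs := enum (predC1 (0 : F)).
have ur : all n.-unity_root rs.
  apply/allP => x; rewrite mem_enum /= => nz; by rewrite unity_rootE unity_nz.
have hs : (n <= size rs)%N by rewrite -cardE cardC1.
have /hasP [g _ pg] := has_prim_root n0 ur (enum_uniq _) hs.
exists g; split; first exact: prim_expr_order pg.
move=> x nz; have [i ->] := prim_rootP pg (unity_nz nz).
by exists i.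
Qed.
Inductive tok := TT of nat & nat | TW0 of nat | TW1 of nat | TW2 of nat | TS0 | TS1 | TS2.

Definition tenc t : nat * nat * nat := match t with
  | TT i j => (0, i, j) | TW0 i => (1, i, 0) | TW1 i => (2, i, 0) | TW2 i => (3, i, 0)
  | TS0 => (4, 0, 0) | TS1 => (5, 0, 0) | TS2 => (6, 0, 0) end%N.
Definition tdec (p : nat * nat * nat) : option tok := match p with
  | (0, i, j) => Some (TT i j) | (1, i, _) => Some (TW0 i) | (2, i, _) => Some (TW1 i)
  | (3, i, _) => Some (TW2 i) | (4, _, _) => Some TS0 | (5, _, _) => Some TS1
  | (6, _, _) => Some TS2 | _ => None end%N.
Lemma tencK : pcancel tenc tdec. Proof. by case. Qed.
HB.instance Definition _ := Equality.copy tok (pcan_type tencK).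

Definition cov_tor n a b t := match t with
  | TT i j => [|| a == i, b == j | (b + i) %% n == (a + j) %% n]%N
  | TW0 i => ((a + i) %% n == b)%N
  | TW1 i => (b == i)%N
  | TW2 i => (a == i)%N
  | _ => false end.
Definition s0ok t := match t with TW0 _ | TS1 | TS2 => true | _ => false end.
Definition s1ok t := match t with TW1 _ | TS0 | TS2 => true | _ => false end.
Definition s2ok t := match t with TW2 _ | TS0 | TS1 => true | _ => false end.
Definition check n (toks : seq tok) :=
  [&& has s0ok toks, has s1ok toks, has s2ok toks &
      all (fun a => all (fun b => has (cov_tor n a b) toks) (iota 0 n)) (iota 0 n)].

Section Upper.
Variable F : finFieldType.
Variable g : F.
Variable n : nat.
Hypothesis n0 : (0 < n)%N.
Hypothesis gn : g ^+ n = 1.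
Hypothesis gen : forall x : F, x != 0 -> exists k, x = g ^+ k.
Notation i0 := (0 : 'I_3).
Notation i1 := (1 : 'I_3).
Notation i2 := (2 : 'I_3).

Definition tv t : vec3 F := match t with
  | TT i j => mkv 1 (g ^+ i) (g ^+ j)
  | TW0 i => mkv 0 1 (g ^+ i)
  | TW1 i => mkv 1 0 (g ^+ i)
  | TW2 i => mkv 1 (g ^+ i) 0
  | TS0 => mkv 1 0 0
  | TS1 => mkv 0 1 0
  | TS2 => mkv 0 0 1 end.

Lemma gexp k : g ^+ (k %% n) = g ^+ k.
Proof. by rewrite {2}(divn_eq k n) exprD mulnC exprM gn expr1n mul1r. Qed.

Lemma gnz k : g ^+ k != 0.
Proof.
apply: expf_neq0; apply/eqP => g0; move: gn; rewrite g0 expr0n.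
by case: n n0 => // m _ /= /eqP; rewrite eq_sym oner_eq0.
Qed.

Lemma gmod p q : (p %% n == q %% n)%N -> g ^+ p = g ^+ q.
Proof. by move=> /eqP e; rewrite -gexp e gexp. Qed.

Lemma mkv_eta (v : vec3 F) : v = mkv (v 0 i0) (v 0 i1) (v 0 i2).
Proof.
apply/rowP => k; rewrite !mxE; case: k => [[|[|[|m]]] Hk] //=; by congr (v 0 _); apply: val_inj.
Qed.

Lemma upper_cov toks : check n toks -> short_covering [set x | x \in map tv toks].
Proof.
case/and4P => /hasP [t0 t0in t0ok] /hasP [t1 t1in t1ok] /hasP [t2 t2in t2ok] /allP tor.
rewrite /short_covering eqEsubset subsetT /=; apply/subsetP => v _.
rewrite cov_memE (mkv_eta v).
set x := v 0 i0; set y := v 0 i1; set z := v 0 i2.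
have wit t l : t \in toks -> agree2 (l *: tv t) (mkv x y z) ->
    [exists h in [set x | x \in map tv toks], exists l : F, agree2 (l *: h) (mkv x y z)].
  move=> tin ag; apply/existsP; exists (tv t); rewrite inE map_f //=.
  by apply/existsP; exists l.
have [x0|xn] := eqVneq x 0; have [y0|yn] := eqVneq y 0; have [z0|zn] := eqVneq z 0.
all: try by apply: (wit t0 0) => //; rewrite agree_mkv !mul0r ?x0 ?y0 ?z0 ?eqxx ?andbT ?orbT.
-
  case: t0 t0in t0ok => // [i||] tin _.
  + apply: (wit _ y tin); rewrite agree_mkv !mxE /= x0 mulr0 mulr1 !eqxx //.
  + apply: (wit _ y tin); rewrite agree_mkv !mxE /= x0 mulr0 mulr1 !eqxx //.
  + apply: (wit _ z tin); rewrite agree_mkv !mxE /= x0 mulr0 mulr1 !eqxx //= orbT //.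
-
  case: t1 t1in t1ok => // [i||] tin _.
  + apply: (wit _ x tin); rewrite agree_mkv !mxE /= y0 mulr0 mulr1 !eqxx //.
  + apply: (wit _ x tin); rewrite agree_mkv !mxE /= y0 mulr0 mulr1 !eqxx //.
  + apply: (wit _ z tin); rewrite agree_mkv !mxE /= y0 mulr0 mulr1 !eqxx //= !orbT //.
-
  case: t2 t2in t2ok => // [i||] tin _.
  + apply: (wit _ x tin); rewrite agree_mkv !mxE /= z0 mulr0 mulr1 !eqxx //= orbT //.
  + apply: (wit _ x tin); rewrite agree_mkv !mxE /= z0 mulr0 mulr1 !eqxx //= orbT //.
  + apply: (wit _ y tin); rewrite agree_mkv !mxE /= z0 mulr0 mulr1 !eqxx //= !orbT //.
have [a ea] := gen ((mulf_neq0 yn (invr_neq0 xn))).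
have [b eb] := gen ((mulf_neq0 zn (invr_neq0 xn))).
have ey : y = x * g ^+ (a %% n) by rewrite gexp -ea mulrC divfK.
have ez : z = x * g ^+ (b %% n) by rewrite gexp -eb mulrC divfK.
have an : (a %% n < n)%N by rewrite ltn_mod.
have bn : (b %% n < n)%N by rewrite ltn_mod.
have ia : (a %% n)%N \in iota 0 n by rewrite mem_iota add0n an.
have ib : (b %% n)%N \in iota 0 n by rewrite mem_iota add0n bn.
have /allP /(_ _ ib) /hasP [t tin] /= := tor _ ia.
move: ey ez; clear ea eb an bn ia ib; move: (a %% n)%N (b %% n)%N => {}a {}b ey ez.
case: t tin => // [i j|i|i|i] tin /=.
- case/or3P => [/eqP ai|/eqP bj|ed].
  + apply: (wit _ x tin); rewrite agree_mkv !mxE /= mulr1 ey ai !eqxx //.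
  + apply: (wit _ x tin); rewrite agree_mkv !mxE /= mulr1 ez bj !eqxx //= orbT //.
  + apply: (wit _ (y / g ^+ i) tin); rewrite agree_mkv !mxE /=.
    apply/or3P; apply: Or33; apply/andP; split; apply/eqP; first by rewrite divfK ?gnz.
    have e : g ^+ a * g ^+ j = g ^+ b * g ^+ i.
      by rewrite -!exprD; apply: gmod; rewrite eq_sym.
    by rewrite ey ez mulrAC -(mulrA x) e mulrA mulfK ?gnz.
- move=> ed; apply: (wit _ y tin); rewrite agree_mkv !mxE /= mulr1 eqxx /=.
  apply/or3P; apply: Or33; apply/eqP.
  rewrite ey ez -mulrA -exprD; congr (_ * _).
  by rewrite -gexp (eqP ed).
- move=> /eqP bi; apply: (wit _ x tin); rewrite agree_mkv !mxE /= mulr1 ez bi !eqxx //= orbT //.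
- move=> /eqP ai; apply: (wit _ x tin); rewrite agree_mkv !mxE /= mulr1 ey ai !eqxx //.
Qed.

End Upper.

Lemma c_le (F : finFieldType) (H : {set vec3 F}) : short_covering H -> (c F <= #|H|)%N.
Proof.
move=> cv; rewrite /c; case: ex_minnP => m _ hmin; apply: hmin.
by apply/existsP; exists H; rewrite cv eqxx.
Qed.

Lemma c_ex (F : finFieldType) : exists H : {set vec3 F}, short_covering H /\ #|H| = c F.
Proof.
rewrite /c; case: ex_minnP => m /existsP [H /andP [cv /eqP e]] _.
by exists H.
Qed.

Lemma c_ub (F : finFieldType) toks : check #|F|.-1 toks -> (c F <= size toks)%N.
Proof.
move=> ch; have [g [gn gen]] := gen_exists F.
have n0 : (0 < #|F|.-1)%N by rewrite -ltnS prednK ?finNzRing_gt1 // ltnW // finNzRing_gt1.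
apply: leq_trans (c_le (upper_cov n0 gn gen ch)) _.
by rewrite cardsE (leq_trans (card_size _)) // size_map.
Qed.

Lemma c_lb (F : finFieldType) : (6 <= #|F|.-1)%N -> (#|F|.-1 <= 8)%N ->
  ((if #|F|.-1 == 6 then 5 else 6) <= c F)%N.
Proof.
move=> h6 h8; have [H [cv <-]] := c_ex F; exact: lower cv h6 h8.
Qed.

Theorem theorem2 :
  (forall F : finFieldType, #|F| = 7%N -> c F = 5%N) /\
  (forall F : finFieldType, #|F| = 8%N -> c F = 6%N) /\
  (forall F : finFieldType, #|F| = 9%N -> c F = 6%N).
Proof.
split; [|split] => F hF; apply/eqP; rewrite eqn_leq.
- have := c_lb (F := F); rewrite hF => /(_ isT isT) /= ->; rewrite andbT.
  by apply: (c_ub (toks := [:: TS0; TS1; TT 0 0; TT 2 4; TT 4 2])); by rewrite hF.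
- have := c_lb (F := F); rewrite hF => /(_ isT isT) /= ->; rewrite andbT.
  by apply: (c_ub (toks := [:: TS0; TW0 0; TT 0 1; TT 1 3; TT 2 0; TT 3 2])); by rewrite hF.
- have := c_lb (F := F); rewrite hF => /(_ isT isT) /= ->; rewrite andbT.
  by apply: (c_ub (toks := [:: TS0; TW0 0; TT 0 2; TT 2 6; TT 4 0; TT 6 4])); by rewrite hF.
Qed.
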